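(* For every $[p,q]\in\hat D_n$, the evaluation functional $\delta_{[p,q]}:\mathcal{A}(D_n)\to\mathbb{C}$, $a\mapsto\hat a([p,q])$, is a continuous unital homomorphism for the pointwise product, and it is a character (i.e. additionally satisfies $\delta_{[p,q]}(a^* )=\overline{\delta_{[p,q]}(a)}$ for all $a$) if and only if $[p,q]\in D_{n,\mathrm{ext}}$.
   Context: Fix $n\ge1$. $D_n=Z/U(1)$, $Z=\{r\in\mathbb{C}^{1+n}:-|r^0|^2+\sum_{i\ge1}|r^i|^2=-1\}$. $\hat D_n=\hat Z/\mathbb{C}^*$, $\hat Z=\{(p,q)\in\mathbb{C}^{1+n}\times\mathbb{C}^{1+n}:-p^0q^0+\sum_{i\ge1}p^iq^i=-1\}$, $z\cdot(p,q)=(zp,q/z)$. $\Delta_D:D_n\to\hat D_n$, $[r]\mapsto[r,\bar r]$. $\tau([p,q])=[\bar q,\bar p]$ is an anti-holomorphic involution of $\hat D_n$, and $D_{n,\mathrm{ext}}=\{x\in\hat D_n:\tau(x)=x\}$. $\mathcal{A}(D_n)=\{\hat a\circ\Delta_D:\hat a\in\mathcal{O}(\hat D_n)\}$, where $\hat a$ is uniquely determined by $a$; it is a commutative unital $*$-algebra with pointwise operations and $a^*=\bar a$ (so $\widehat{a^*}=\overline{\hat a\circ\tau}$), and a Fréchet space with seminorms $\|a\|_{D_n,K}=\sup_K|\hat a|$, $K\subseteq\hat D_n$ compact. *)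

(* Defs.v *)
From HB Require Import structures.
From mathcomp Require Import all_boot all_order all_algebra.
From mathcomp Require Import complex.
From mathcomp Require Import all_classical all_reals all_analysis.
Import Order.TTheory GRing.Theory Num.Theory ComplexField.
Import numFieldNormedType.Exports numFieldTopology.Exports.
Local Open Scope ring_scope.
Local Open Scope classical_set_scope.

Set Implicit Arguments.
Unset Strict Implicit.
Unset Printing Implicit Defensive.

Definition CC (R : realType) : numClosedFieldType := R[i].

Definition cabs (R : realType) (z : CC R) : R := complex.Re `|z|.

(* C^{1+n}, coordinates indexed 0..n. *)
Definition vec (R : realType) (n : nat) := 'rV[CC R]_(n.+1).

Definition amb (R : realType) (n : nat) := (vec R n * vec R n)%type.

Definition bilin (R : realType) (n : nat) (p q : vec R n) : CC R :=
  - (p ord0 ord0 * q ord0 ord0)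
  + \sum_(i < n) p ord0 (lift ord0 i) * q ord0 (lift ord0 i).

Definition Zhat (R : realType) (n : nat) : set (amb R n) :=
  [set pq | bilin pq.1 pq.2 = -1].
Arguments Zhat {R} n.

Definition cact (R : realType) (n : nat) (z : CC R) (pq : amb R n) : amb R n :=
  (z *: pq.1, z^-1 *: pq.2).

(* Two points of \hat Z represent the same point of \hat D_n = \hat Z / C^*. *)
Definition same_class (R : realType) (n : nat) (x y : amb R n) : Prop :=
  exists z : CC R, z != 0 /\ y = cact z x.

Definition tau (R : realType) (n : nat) (pq : amb R n) : amb R n :=
  (map_mx (fun z : CC R => z^*) pq.2, map_mx (fun z : CC R => z^*) pq.1).

(* [p,q] \in D_{n,ext}  <->  tau([p,q]) = [p,q] in \hat D_n. *)
Definition in_Dext (R : realType) (n : nat) (pq : amb R n) : Prop :=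
  same_class pq (tau pq).

(* Holomorphic function on an open subset U of C^{1+n} x C^{1+n}:
   complex (Frechet) differentiable at every point of U. *)
Definition holo_on (R : realType) (n : nat) (U : set (amb R n))
    (g : amb R n -> (CC R)^o) : Prop :=
  forall x, U x -> differentiable g x.

(* Holomorphic function on \hat D_n = \hat Z / C^*, represented by its
   pull-back f to \hat Z (only the values of f on \hat Z matter):
   f is C^*-invariant on \hat Z, and holomorphic on the complex submanifold
   \hat Z, i.e. locally the restriction of an ambient holomorphic function. *)
Definition holo_Dhat (R : realType) (n : nat) (f : amb R n -> CC R) : Prop :=
  (forall x, Zhat n x -> forall z : CC R, z != 0 -> f (cact z x) = f x) /\
  (forall x, Zhat n x ->
     exists U : set (amb R n), [/\ open U, U x &
       exists g : amb R n -> (CC R)^o,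
         holo_on U g /\ (forall y, U y -> Zhat n y -> f y = g y)]).

(* The algebra A(D_n), each element a being represented by \hat a
   (a = \hat a o Delta_D, \hat a uniquely determined by a).
   Pointwise operations; star: \hat{a^*} = conj (\hat a o tau). *)
Definition Aalg (R : realType) (n : nat) : set (amb R n -> CC R) :=
  [set f | holo_Dhat f].
Arguments Aalg {R} n.

Definition Aone (R : realType) (n : nat) : amb R n -> CC R := fun _ => 1.
Arguments Aone {R} n.
Definition Aadd (R : realType) (n : nat) (f g : amb R n -> CC R) :=
  fun x => f x + g x.
Definition Amul (R : realType) (n : nat) (f g : amb R n -> CC R) :=
  fun x => f x * g x.
Definition Ascale (R : realType) (n : nat) (c : CC R) (f : amb R n -> CC R) :=
  fun x => c * f x.
Definition Asub (R : realType) (n : nat) (f g : amb R n -> CC R) :=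
  fun x => f x - g x.
Definition Astar (R : realType) (n : nat) (f : amb R n -> CC R) :=
  fun x => (f (tau x))^*.

Definition of_hat (R : realType) (n : nat) (f : amb R n -> CC R) :=
  fun r : vec R n => f (r, map_mx (fun z : CC R => z^*) r).

(* Seminorm ||a||_{D_n,K} = sup_K |\hat a|, K a compact subset of \hat Z
   (compact subsets of \hat D_n are exactly images of compact subsets of
   \hat Z). *)
Definition seminorm (R : realType) (n : nat) (K : set (amb R n))
    (f : amb R n -> CC R) : R :=
  sup [set cabs (f x) | x in K].

Definition compact_in_Zhat (R : realType) (n : nat) (K : set (amb R n)) :=
  compact K /\ K `<=` Zhat n.

(* Continuity of a map A(D_n) -> C for the Frechet topology defined by the
   (directed) family of seminorms ||.||_K. *)
Definition A_continuous (R : realType) (n : nat)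
    (phi : (amb R n -> CC R) -> CC R) : Prop :=
  forall f, Aalg n f -> forall eps : R, 0 < eps ->
    exists K : set (amb R n), compact_in_Zhat K /\
    exists2 eta : R, 0 < eta &
      forall g, Aalg n g -> seminorm K (Asub g f) < eta ->
        cabs (phi g - phi f) < eps.

Definition unital_hom (R : realType) (n : nat)
    (phi : (amb R n -> CC R) -> CC R) : Prop :=
  [/\ phi (Aone n) = 1,
      (forall f g, Aalg n f -> Aalg n g -> phi (Aadd f g) = phi f + phi g),
      (forall c f, Aalg n f -> phi (Ascale c f) = c * phi f) &
      (forall f g, Aalg n f -> Aalg n g -> phi (Amul f g) = phi f * phi g)].

Definition is_character (R : realType) (n : nat)
    (phi : (amb R n -> CC R) -> CC R) : Prop :=
  unital_hom phi /\ (forall f, Aalg n f -> phi (Astar f) = (phi f)^*).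

Definition delta (R : realType) (n : nat) (pq : amb R n) :
    (amb R n -> CC R) -> CC R := fun f => f pq.

(* Main.v *)
Require Import Defs.
From HB Require Import structures.
From mathcomp Require Import all_boot all_order all_algebra.
From mathcomp Require Import complex.
From mathcomp Require Import all_classical all_reals all_analysis.
From mathcomp Require Import ring.
Import Order.TTheory GRing.Theory Num.Theory ComplexField.
Import numFieldNormedType.Exports numFieldTopology.Exports.
Local Open Scope ring_scope.
Local Open Scope classical_set_scope.

Lemma diff_fst (R : realType) (n : nat) (x : amb R n) :
  differentiable (fun y : amb R n => y.1) x.
Proof.
have lin : linear (fst : amb R n -> vec R n) by [].
pose flM := GRing.isLinear.Build _ _ _ _ _ lin.
pose fL : {linear amb R n -> vec R n} := HB.pack (fst : amb R n -> vec R n) flM.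
rewrite (_ : (fun _ => _) = fL) //; apply/linear_differentiable.
by move=> y; exact: cvg_fst.
Qed.

Lemma diff_snd (R : realType) (n : nat) (x : amb R n) :
  differentiable (fun y : amb R n => y.2) x.
Proof.
have lin : linear (snd : amb R n -> vec R n) by [].
pose flM := GRing.isLinear.Build _ _ _ _ _ lin.
pose fL : {linear amb R n -> vec R n} := HB.pack (snd : amb R n -> vec R n) flM.
rewrite (_ : (fun _ => _) = fL) //; apply/linear_differentiable.
by move=> y; exact: cvg_snd.
Qed.

Definition fij (R : realType) (n : nat) (i j : 'I_n.+1) : amb R n -> CC R :=
  fun x => x.1 ord0 i * x.2 ord0 j.
Arguments fij {R n}.

Lemma fij_A (R : realType) (n : nat) (i j : 'I_n.+1) : @Aalg R n (fij i j).
Proof.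
split.
  move=> x _ z hz; rewrite /fij /cact /= !mxE.
  by rewrite mulrACA mulfV // mul1r.
move=> x _; exists setT; split => //; first exact: openT.
exists (fij i j : amb R n -> (CC R)^o); split => // y _.
have d1 : differentiable (fun x : amb R n => (x.1 ord0 i : (CC R)^o)) y.
  apply: (@differentiable_comp _ _ _ _ (fun x : amb R n => x.1)
     (fun M : vec R n => (M ord0 i : (CC R)^o))).
    exact: diff_fst.
  exact: differentiable_coord.
have d2 : differentiable (fun x : amb R n => (x.2 ord0 j : (CC R)^o)) y.
  apply: (@differentiable_comp _ _ _ _ (fun x : amb R n => x.2)
     (fun M : vec R n => (M ord0 j : (CC R)^o))).
    exact: diff_snd.
  exact: differentiable_coord.
exact: (differentiableM d1 d2).
Qed.

Theorem proposition4p8 (R : realType) (n : nat) (hn : (1 <= n)%N)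
    (p q : vec R n) (hpq : Zhat n (p, q)) :
  [/\ A_continuous (delta (p, q)),
      unital_hom (delta (p, q)) &
      (is_character (delta (p, q)) <-> in_Dext (p, q))].
Proof.
have hom : unital_hom (delta (p, q)) by split.
split => //.
- move=> f hf eps heps; exists [set (p, q)]; split.
    split; first exact: compact_set1.
    by move=> x ->.
  exists eps => // g hg.
  by rewrite /seminorm image_set1 sup1 /Asub /delta.
split; last first.
  move=> [z [hz ht]]; split => // f [hinv _].
  by rewrite /delta /Astar ht hinv.
move=> [_ hstar].
have E : forall i j : 'I_n.+1,
    (map_mx (fun z : CC R => z^*) q) ord0 i * (map_mx (fun z : CC R => z^*) p) ord0 j
    = p ord0 i * q ord0 j.
  move=> i j; have := hstar _ (@fij_A R n i j).
  rewrite /delta /Astar /fij /tau /= => /(congr1 (fun z : CC R => z^*)).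
  by rewrite !conjCK.
set p' := map_mx _ q in E *; set q' := map_mx _ p in E *.
have [m hm] : exists m : 'I_n.+1, p ord0 m * q ord0 m != 0.
  apply/existsP; apply: contraT; rewrite negb_exists => /forallP H0.
  move: hpq; rewrite /Zhat /bilin /= (eqP (negbNE (H0 _))) big1.
    by move/eqP; rewrite oppr0 addr0 eq_sym oppr_eq0 oner_eq0.
  by move=> k _; apply/eqP/negbNE/H0.
have pm0 : p ord0 m != 0 by move: hm; rewrite mulf_eq0 negb_or => /andP[].
have hm' : p' ord0 m * q' ord0 m != 0 by rewrite E.
have pm0' : p' ord0 m != 0 by move: hm'; rewrite mulf_eq0 negb_or => /andP[].
have qm0' : q' ord0 m != 0 by move: hm'; rewrite mulf_eq0 negb_or => /andP[].
exists (p' ord0 m / p ord0 m); split.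
  by rewrite mulf_neq0 // invr_eq0.
rewrite /tau /cact /= -/p' -/q'; congr (_, _); apply/rowP => k; rewrite [RHS]mxE.
  apply: (mulIf qm0'); rewrite E.
  have -> : p' ord0 m / p ord0 m * p ord0 k * q' ord0 m
      = (p' ord0 m * q' ord0 m) * p ord0 k / p ord0 m by ring.
  rewrite E; field; exact: pm0.
apply: (mulfI pm0'); rewrite E.
field; apply/andP; split => //.
Qed.
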